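(* Let $f_{\mathrm{MCP}}$ be the maximum coordinate plurality rule. In the $\ell^1$ linear social choice setting, the worst-case distortion of $f_{\mathrm{MCP}}$ satisfies $\mathrm{D}(f_{\mathrm{MCP}}) = O(d^3)$.
   Context: Setting ($\ell^1$ linear social choice). Fix a dimension $d\ge 1$ and let $\Delta_d=\{x\in\mathbb{R}^d_{\ge 0}:\sum_i x^i=1\}$ (superscripts denote coordinates). An instance consists of a finite set $V$ of $n$ voters and a finite set $C$ of $m$ candidates, each identified with a vector in $\Delta_d$, with the expressiveness assumption that every voter vector lies in $\mathrm{Cone}(C)$, the set of nonnegative linear combinations of candidate vectors. Voter $v$'s utility for candidate $c$ is $u_v(c)=v^\top c$. Each voter reports a ranking $\sigma_v$ of $C$ consistent with its utilities ($c$ is ranked above $c'$ only if $u_v(c)\ge u_v(c')$; ties broken arbitrarily); $\sigma=(\sigma_v)_{v\in V}$ is the preference profile. The utilitarian welfare of $c$ is $\mathrm{UW}(c)=\sum_{v\in V}u_v(c)$. A (possibly randomized) voting rule $f$ outputs a distribution over $C$ based on the profile (and, when its definition uses them, the candidate vectors), but never sees the voter vectors. Its distortion on an instance is $\max_{c\in C}\mathrm{UW}(c)/\mathbb{E}_{c\sim f}[\mathrm{UW}(c)]$, and its worst-case distortion $\mathrm{D}(f)$ is the supremum of this ratio over all instances (all $n,m$, all consistent rankings), viewed as a function of $d$. Maximum coordinate plurality: form a set $\hat C\subseteq C$ containing, for each coordinate $i\in[d]$, one candidate $c\in C$ maximizing the coordinate $c^i$ over $C$ (so $|\hat C|\le d$);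 restrict every voter's ranking to $\hat C$ and output a plurality winner (a candidate of $\hat C$ ranked first among $\hat C$ by the largest number of voters, ties broken arbitrarily). *)

(* Defs.v *)
From HB Require Import structures.
From mathcomp Require Import all_boot all_order all_algebra all_fingroup.
From mathcomp Require Import reals.
Set Implicit Arguments. Unset Strict Implicit. Unset Printing Implicit Defensive.
Import Order.TTheory GRing.Theory Num.Theory.
Local Open Scope ring_scope.

Section Defs.
Variable R : realType.
Variables (d n m : nat).

Definition in_simplex (x : 'I_d -> R) : Prop :=
  (forall i, 0 <= x i) /\ \sum_(i < d) x i = 1.

Definition in_cone (C : 'I_m -> 'I_d -> R) (x : 'I_d -> R) : Prop :=
  exists lam : 'I_m -> R, (forall j, 0 <= lam j) /\
    forall i, x i = \sum_(j < m) lam j * C j i.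

Definition util (v c : 'I_d -> R) : R := \sum_(i < d) v i * c i.

Definition UW (V : 'I_n -> 'I_d -> R) (C : 'I_m -> 'I_d -> R) (c : 'I_m) : R :=
  \sum_(v < n) util (V v) (C c).

(* sigma v c = position of c in voter v's ranking (0 = top);
   consistency: c ranked above c' only if u_v(c) >= u_v(c') *)
Definition consistent (V : 'I_n -> 'I_d -> R) (C : 'I_m -> 'I_d -> R)
    (sigma : 'I_n -> {perm 'I_m}) : Prop :=
  forall v c c', (sigma v c < sigma v c')%N -> util (V v) (C c') <= util (V v) (C c).

Definition mcp_choice (C : 'I_m -> 'I_d -> R) (chat : 'I_d -> 'I_m) : Prop :=
  forall i c, C c i <= C (chat i) i.

Definition Chat (chat : 'I_d -> 'I_m) : {set 'I_m} := [set chat i | i : 'I_d].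

Definition top_in (sigma : 'I_n -> {perm 'I_m}) (S : {set 'I_m}) (v : 'I_n) (c : 'I_m) : bool :=
  (c \in S) && [forall c' in S, (sigma v c <= sigma v c')%N].

Definition plur_score (sigma : 'I_n -> {perm 'I_m}) (S : {set 'I_m}) (c : 'I_m) : nat :=
  #|[set v : 'I_n | top_in sigma S v c]|.

Definition plurality_winner (sigma : 'I_n -> {perm 'I_m}) (S : {set 'I_m}) (w : 'I_m) : Prop :=
  w \in S /\ forall c, c \in S -> (plur_score sigma S c <= plur_score sigma S w)%N.

End Defs.

(* Main.v *)
Require Import Defs.
From HB Require Import structures.
From mathcomp Require Import all_boot all_order all_algebra all_fingroup.
From mathcomp Require Import reals.
Import Order.TTheory GRing.Theory Num.Theory.
Local Open Scope ring_scope.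

Section Aux.
Variable R : realType.

Lemma util_ge0 d (v c : 'I_d -> R) : in_simplex v -> in_simplex c -> 0 <= util v c.
Proof.
move=> [hv _] [hc _]; rewrite /util; apply: sumr_ge0 => i _; exact: mulr_ge0.
Qed.

Lemma util_le1 d (v c : 'I_d -> R) : in_simplex v -> in_simplex c -> util v c <= 1.
Proof.
move=> [hv sv] [hc sc]; rewrite /util -sv; apply: ler_sum => i _.
rewrite -[leRHS]mulr1; apply: ler_wpM2l => //.
rewrite -sc (bigD1 i) //= lerDl; apply: sumr_ge0 => j _; exact: hc.
Qed.

Lemma cone_le d m (C : 'I_m -> 'I_d -> R) (chat : 'I_d -> 'I_m) v :
  (forall c, in_simplex (C c)) -> mcp_choice C chat -> in_simplex v -> in_cone C v ->
  forall i, v i <= C (chat i) i.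
Proof.
move=> hC hch [hv sv] [lam [hl hx]] i.
have s1 : \sum_(j < m) lam j = 1.
  rewrite -sv; under [RHS]eq_bigr => k _ do rewrite hx.
  rewrite exchange_big /=; apply: eq_bigr => j _.
  by rewrite -mulr_sumr (proj2 (hC j)) mulr1.
rewrite hx -[leRHS]mul1r -s1 mulr_suml; apply: ler_sum => j _.
by apply: ler_wpM2l; [exact: hl | exact: hch].
Qed.

Lemma exists_big d (v : 'I_d -> R) : (1 <= d)%N -> in_simplex v ->
  exists i, (d%:R)^-1 <= v i.
Proof.
move=> hd [hv sv].
pose i0 := Ordinal hd.
case: (@arg_maxP _ R _ i0 predT v erefl) => i _ hi.
exists i.
have dpos : 0 < (d%:R : R) by rewrite ltr0n.
have h : \sum_(j < d) v j <= d%:R * v i.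
  apply: (@le_trans _ _ (\sum_(j < d) v i)).
    by apply: ler_sum => j _; apply: hi.
  by rewrite sumr_const card_ord mulr_natl.
rewrite sv in h.
have dn0 : (d%:R : R) != 0 by rewrite lt0r_neq0.
have -> : v i = d%:R^-1 * (d%:R * v i) by rewrite mulrA mulVf // mul1r.
apply: (@le_trans _ _ (d%:R^-1 * 1)); first by rewrite mulr1.
by apply: ler_wpM2l => //; rewrite invr_ge0 ltW.
Qed.

Lemma util_ge_term d (v c : 'I_d -> R) i : in_simplex v -> in_simplex c ->
  v i * c i <= util v c.
Proof.
move=> [hv _] [hc _]; rewrite /util (bigD1 i) //= lerDl.
by apply: sumr_ge0 => j _; apply: mulr_ge0.
Qed.

Lemma top_util d n m (V : 'I_n -> 'I_d -> R) (C : 'I_m -> 'I_d -> R)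
    (sigma : 'I_n -> {perm 'I_m}) (chat : 'I_d -> 'I_m) v t :
  (1 <= d)%N ->
  (forall v, in_simplex (V v)) -> (forall c, in_simplex (C c)) ->
  (forall v, in_cone C (V v)) -> consistent V C sigma -> mcp_choice C chat ->
  top_in sigma (Chat chat) v t -> (d%:R ^+ 2)^-1 <= util (V v) (C t).
Proof.
move=> hd hV hC hcone hcons hch /andP[tin /forall_inP htop].
have [i hi] := @exists_big d _ hd (hV v).
have hle := @cone_le d m C chat _ hC hch (hV v) (hcone v) i.
have dpos : 0 < (d%:R : R) by rewrite ltr0n.
have h1 : (d%:R ^+ 2)^-1 <= util (V v) (C (chat i)).
  apply: le_trans (@util_ge_term d _ _ i (hV v) (hC _)).
  rewrite expr2 invfM.
  apply: ler_pM => //; first by rewrite invr_ge0 ltW.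
  by rewrite invr_ge0 ltW.
  exact: le_trans hle.
have cin : chat i \in Chat chat by apply: imset_f.
have := htop _ cin; rewrite leq_eqVlt => /orP[/eqP/ord_inj/perm_inj e|lt].
  by rewrite e.
exact: le_trans h1 (hcons _ _ _ lt).
Qed.
End Aux.

Theorem theorem3 (R : realType) :
  exists (K : R) (d0 : nat), 0 < K /\
  forall (d n m : nat) (V : 'I_n -> 'I_d -> R) (C : 'I_m -> 'I_d -> R)
    (sigma : 'I_n -> {perm 'I_m}) (chat : 'I_d -> 'I_m) (w : 'I_m),
    (1 <= d)%N -> (d0 <= d)%N ->
    (forall v, in_simplex (V v)) ->
    (forall c, in_simplex (C c)) ->
    (forall v, in_cone C (V v)) ->
    consistent V C sigma ->
    mcp_choice C chat ->
    plurality_winner sigma (Chat chat) w ->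
    forall c : 'I_m, UW V C c <= K * (d%:R) ^+ 3 * UW V C w.
Proof.
exists 1, 0%N; split => //.
move=> d n m V C sigma chat w hd _ hV hC hcone hcons hch [win hwin] c.
have dpos : 0 < (d%:R : R) by rewrite ltr0n.
have dn0 : (d%:R : R) != 0 by rewrite lt0r_neq0.
have hA : UW V C c <= n%:R.
  rewrite /UW; apply: (@le_trans _ _ (\sum_(v < n) (1 : R))).
    by apply: ler_sum => v _; apply: util_le1.
  by rewrite sumr_const card_ord.
set S := [set v | top_in sigma (Chat chat) v w].
have hB : (n <= d * #|S|)%N.
  pose c0 := chat (Ordinal hd).
  have c0in : c0 \in Chat chat by apply: imset_f.
  have ex : forall v, exists t, top_in sigma (Chat chat) v t.
    move=> v.
    case: (@arg_minnP _ c0 (mem (Chat chat)) (fun c => nat_of_ord (sigma v c)) c0in).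
    move=> t tin ht; exists t; apply/andP; split => //.
    by apply/forall_inP => x xin; apply: ht.
  have e : forall c, plur_score sigma (Chat chat) c =
      (\sum_(v < n) (top_in sigma (Chat chat) v c : nat))%N.
    move=> c'; rewrite /plur_score -sum1_card big_mkcond /=.
    by apply: eq_bigr => v _; rewrite inE; case: top_in.
  apply: (@leq_trans (\sum_(v < n) \sum_(c in Chat chat) (top_in sigma (Chat chat) v c : nat))%N).
    rewrite -[X in (X <= _)%N]card_ord -sum1_card.
    apply: leq_sum => v _.
    have [t ht] := ex v.
    have tin : t \in Chat chat by case/andP: ht.
    by rewrite (bigD1 t) //= ht leq_addr.
  rewrite exchange_big /=.
  apply: (@leq_trans (\sum_(c in Chat chat) #|S|)%N).
    apply: leq_sum => c' c'in; rewrite -e; exact: hwin.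
  rewrite sum_nat_const leq_mul2r; apply/orP; right.
  by rewrite -[X in (_ <= X)%N]card_ord leq_imset_card.
have hC' : #|S|%:R * (d%:R ^+ 2)^-1 <= UW V C w.
  rewrite /UW (bigID (mem S)) /=.
  apply: (@le_trans _ _ (\sum_(v in S) util (V v) (C w))).
    rewrite mulr_natl -sumr_const; apply: ler_sum => v; rewrite inE => hv.
    exact: top_util hd hV hC hcone hcons hch hv.
  rewrite lerDl; apply: sumr_ge0 => v _; exact: util_ge0.
apply: (le_trans hA); apply: (@le_trans _ _ ((d * #|S|)%N%:R)); first by rewrite ler_nat.
apply: (@le_trans _ _ (1 * d%:R ^+ 3 * (#|S|%:R * (d%:R ^+ 2)^-1))).
  rewrite natrM mul1r exprS mulrA -!mulrA; apply: ler_wpM2l; first exact: ltW.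
  by rewrite mulrA -expr2 mulrC -mulrA mulVf ?mulr1 // expf_neq0.
apply: ler_wpM2l => //; rewrite mul1r exprn_ge0 // ltW.
Qed.
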